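(* Let $(p,\mathcal D,L)$ be a Hadamard triple on $\mathbb R$ with $p>1$, $0\in\mathcal D\subset\{0,1,2,\dots\}$ and $0\in L\subset\{0,1,\dots,p-1\}$. Then $(p,\mathcal D)$ satisfies DPC if and only if $p>\#\mathcal D$.
   Context: A Hadamard triple on $\mathbb R$ is a triple $(p,\mathcal D,L)$ with $p>1$ an integer, $\mathcal D,L\subset\mathbb Z$ finite with $\#\mathcal D=\#L$, such that $\frac{1}{\sqrt{\#\mathcal D}}\big[e^{2\pi i d\ell/p}\big]_{\ell\in L,d\in\mathcal D}$ is unitary. For finite $A\subset\mathbb R$, $\widehat{\delta_{cA}}(\xi)=\frac1{\#A}\sum_{a\in A}e^{2\pi i ca\xi}$. $T_{p,D}$ denotes the set of $\xi\in[0,1)$ for which there exist distinct $\ell_1,\ell_2\in\{0,\dots,p-1\}$ with $\widehat{\delta_{p^{-1}D}}(\xi+\ell_i)\ne0$, $i=1,2$; $(p,D)$ satisfies the Double Points Condition (DPC) if $T_{p,D}=[0,1)$. *)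

(* Defs.v *)
From Stdlib Require Import Reals ZArith List.
From Coquelicot Require Import Coquelicot.
Open Scope R_scope.

Definition csum {A : Type} (f : A -> C) (l : list A) : C :=
  fold_right (fun x acc => Cplus (f x) acc) (RtoC 0) l.

Definition expi2pi (x : R) : C := (cos (2 * PI * x), sin (2 * PI * x)).

Definition cdelta (a b : Z) : C := if Z.eq_dec a b then RtoC 1 else RtoC 0.

Definition hmat (p : Z) (D : list Z) (l d : Z) : C :=
  Cmult (RtoC (/ sqrt (INR (length D)))) (expi2pi (IZR d * IZR l / IZR p)).

Definition unitary_hmat (p : Z) (D L : list Z) : Prop :=
  (forall l1 l2, In l1 L -> In l2 L ->
     csum (fun d => Cmult (hmat p D l1 d) (Cconj (hmat p D l2 d))) D = cdelta l1 l2) /\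
  (forall d1 d2, In d1 D -> In d2 D ->
     csum (fun l => Cmult (Cconj (hmat p D l d1)) (hmat p D l d2)) L = cdelta d1 d2).

(* Hadamard triple (p, D, L) on R; finite sets of integers are duplicate-free lists. *)
Definition hadamard_triple (p : Z) (D L : list Z) : Prop :=
  (1 < p)%Z /\ NoDup D /\ NoDup L /\ length D = length L /\ unitary_hmat p D L.

Definition delta_hat (c : R) (A : list Z) (xi : R) : C :=
  Cmult (RtoC (/ INR (length A))) (csum (fun a => expi2pi (c * IZR a * xi)) A).

Definition T_set (p : Z) (D : list Z) (xi : R) : Prop :=
  0 <= xi < 1 /\
  exists l1 l2 : Z, (0 <= l1 <= p - 1)%Z /\ (0 <= l2 <= p - 1)%Z /\ l1 <> l2 /\
    delta_hat (/ IZR p) D (xi + IZR l1) <> RtoC 0 /\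
    delta_hat (/ IZR p) D (xi + IZR l2) <> RtoC 0.

Definition DPC (p : Z) (D : list Z) : Prop :=
  forall xi : R, T_set p D xi <-> 0 <= xi < 1.

(* Main.v *)
Require Import Defs.
From Stdlib Require Import Reals ZArith List Lia Lra Classical.
From Coquelicot Require Import Coquelicot.
Open Scope R_scope.

Lemma Ceq (a b c d : R) : a = c -> b = d -> ((a,b) : C) = (c,d).
Proof. intros; subst; reflexivity. Qed.

Lemma csum_nil {A} (f : A -> C) : csum f nil = RtoC 0.
Proof. reflexivity. Qed.
Lemma csum_cons {A} (f : A -> C) x l : csum f (x :: l) = Cplus (f x) (csum f l).
Proof. reflexivity. Qed.

Lemma csum_ext {A} (f g : A -> C) l :
  (forall x, In x l -> f x = g x) -> csum f l = csum g l.
Proof.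
  induction l as [|a l IH]; intros H; simpl; auto.
  rewrite H by (left; auto). rewrite IH; auto. intros; apply H; right; auto.
Qed.

Lemma csum_scal {A} (c : C) (f : A -> C) l :
  Cmult c (csum f l) = csum (fun x => Cmult c (f x)) l.
Proof.
  induction l as [|a l IH]; simpl.
  - destruct c; unfold Cmult, RtoC; simpl; apply Ceq; ring.
  - rewrite <- IH. destruct c, (f a), (csum f l); unfold Cmult, Cplus; simpl; apply Ceq; ring.
Qed.

Lemma csum_scal_r {A} (c : C) (f : A -> C) l :
  Cmult (csum f l) c = csum (fun x => Cmult (f x) c) l.
Proof.
  induction l as [|a l IH]; simpl.
  - destruct c; unfold Cmult, RtoC; simpl; apply Ceq; ring.
  - rewrite <- IH. destruct c, (f a), (csum f l); unfold Cmult, Cplus; simpl; apply Ceq; ring.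
Qed.

Lemma csum_plus {A} (f g : A -> C) l :
  csum (fun x => Cplus (f x) (g x)) l = Cplus (csum f l) (csum g l).
Proof.
  induction l as [|a l IH]; simpl.
  - unfold Cplus, RtoC; simpl; apply Ceq; ring.
  - rewrite IH. destruct (f a), (g a), (csum f l), (csum g l); unfold Cplus; simpl; apply Ceq; ring.
Qed.

Lemma csum_swap {A B} (f : A -> B -> C) l1 l2 :
  csum (fun x => csum (fun y => f x y) l2) l1 = csum (fun y => csum (fun x => f x y) l1) l2.
Proof.
  induction l1 as [|a l IH]; simpl.
  - induction l2; simpl; auto. rewrite <- IHl2. unfold Cplus, RtoC; simpl; apply Ceq; ring.
  - rewrite IH. rewrite <- csum_plus. reflexivity.
Qed.

Lemma csum_zero {A} (f : A -> C) l :
  (forall x, In x l -> f x = RtoC 0) -> csum f l = RtoC 0.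
Proof.
  induction l as [|a l IH]; intros H; simpl; auto.
  rewrite H by (left; auto). rewrite IH by (intros; apply H; right; auto).
  unfold Cplus, RtoC; simpl; apply Ceq; ring.
Qed.

Lemma csum_single {A} (f : A -> C) l a :
  NoDup l -> In a l -> (forall x, In x l -> x <> a -> f x = RtoC 0) -> csum f l = f a.
Proof.
  induction l as [|b l IH]; intros Hn Ha H; simpl in *. contradiction.
  inversion Hn; subst. destruct Ha as [<-|Ha].
  - rewrite csum_zero. destruct (f b); unfold Cplus, RtoC; simpl; apply Ceq; ring.
    intros x Hx; apply H; auto. intro; subst; contradiction.
  - rewrite H; auto. rewrite IH; auto. destruct (f a); unfold Cplus, RtoC; simpl; apply Ceq; ring.
    intro; subst; contradiction.
Qed.

Lemma csum_const {A} (c : R) l :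
  csum (fun _ : A => RtoC c) l = RtoC (INR (length l) * c).
Proof.
  induction l as [|a l IH]. simpl. unfold RtoC; apply Ceq; ring.
  rewrite csum_cons, IH. cbn [length]. rewrite S_INR. unfold Cplus, RtoC; simpl; apply Ceq; ring.
Qed.

Lemma Cmult_eq0 (z w : C) : Cmult z w = RtoC 0 -> z <> RtoC 0 -> w = RtoC 0.
Proof.
  destruct z as [a b], w as [c d]; unfold Cmult, RtoC; simpl. intros H Hz.
  injection H; intros H2 H1.
  assert (Hp : a*a + b*b <> 0).
  { intro E. apply Hz. pose proof (Rle_0_sqr a). pose proof (Rle_0_sqr b). unfold Rsqr in *.
    assert (Ha : a*a = 0) by lra. assert (Hb : b*b=0) by lra.
    apply Rmult_integral in Ha; apply Rmult_integral in Hb.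
    assert (a = 0) by tauto. assert (b = 0) by tauto. subst; reflexivity. }
  assert (c * (a*a+b*b) = 0).
  { replace (c * (a*a+b*b)) with (a*(a*c-b*d) + b*(a*d+b*c)) by ring. rewrite H1, H2; ring. }
  assert (d * (a*a+b*b) = 0).
  { replace (d * (a*a+b*b)) with (a*(a*d+b*c) - b*(a*c-b*d)) by ring. rewrite H1, H2; ring. }
  apply Ceq. apply Rmult_integral in H0; destruct H0; auto; contradiction.
  apply Rmult_integral in H3; destruct H3; auto; contradiction.
Qed.

Lemma e_add a b : expi2pi (a + b) = Cmult (expi2pi a) (expi2pi b).
Proof.
  unfold expi2pi, Cmult; simpl. apply Ceq.
  replace (2*PI*(a+b)) with (2*PI*a + 2*PI*b) by ring. apply cos_plus.
  replace (2*PI*(a+b)) with (2*PI*a + 2*PI*b) by ring. rewrite sin_plus; ring.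
Qed.

Lemma e_int (n : Z) : expi2pi (IZR n) = RtoC 1.
Proof.
  assert (Hs : sin (PI * IZR n) = 0) by (apply sin_eq_0_1; exists n; ring).
  unfold expi2pi, RtoC. apply Ceq.
  - replace (2*PI*IZR n) with (2*(PI*IZR n)) by ring. rewrite cos_2a_sin, Hs; ring.
  - apply sin_eq_0_1; exists (2*n)%Z. rewrite mult_IZR. ring.
Qed.

Lemma e_ne0 a : expi2pi a <> RtoC 0.
Proof.
  unfold expi2pi, RtoC. intro H; injection H; intros.
  pose proof (sin2_cos2 (2*PI*a)). rewrite H0, H1 in H2. unfold Rsqr in H2. lra.
Qed.

Lemma e_one a : expi2pi a = RtoC 1 -> exists k : Z, a = IZR k.
Proof.
  unfold expi2pi, RtoC; intro H; injection H; intros _ Hc.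
  replace (2*PI*a) with (2*(PI*a)) in Hc by ring. rewrite cos_2a_sin in Hc.
  assert (sin (PI*a) = 0) by nra. apply sin_eq_0_0 in H0. destruct H0 as [k Hk].
  exists k. pose proof PI_RGT_0. apply Rmult_eq_reg_l with PI; lra.
Qed.

Fixpoint rng (n : nat) : list Z :=
  match n with O => nil | S m => Z.of_nat m :: rng m end.

Lemma In_rng n l : In l (rng n) <-> (0 <= l < Z.of_nat n)%Z.
Proof.
  induction n as [|n IH]; simpl. lia.
  rewrite IH. lia.
Qed.

Lemma NoDup_rng n : NoDup (rng n).
Proof.
  induction n as [|n IH]; simpl; constructor; auto.
  rewrite In_rng; lia.
Qed.

Lemma length_rng n : length (rng n) = n.
Proof. induction n; simpl; auto. Qed.

Lemma Cmult_0_l z : Cmult (RtoC 0) z = RtoC 0.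
Proof. destruct z; unfold Cmult, RtoC; simpl; apply Ceq; ring. Qed.
Lemma Cmult_0_r z : Cmult z (RtoC 0) = RtoC 0.
Proof. destruct z; unfold Cmult, RtoC; simpl; apply Ceq; ring. Qed.

Lemma e0 : expi2pi 0 = RtoC 1.
Proof. exact (e_int 0). Qed.

Lemma geo_step (th : R) m :
  Cplus (Cmult (expi2pi th) (csum (fun l => expi2pi (th * IZR l)) (rng m))) (RtoC 1)
  = Cplus (csum (fun l => expi2pi (th * IZR l)) (rng m)) (expi2pi (th * IZR (Z.of_nat m))).
Proof.
  induction m as [|m IH].
  - simpl. rewrite Rmult_0_r, e0. destruct (expi2pi th); unfold Cmult, Cplus, RtoC; simpl; apply Ceq; ring.
  - cbn [rng]. rewrite csum_cons.
    replace (th * IZR (Z.of_nat (S m))) with (th * IZR (Z.of_nat m) + th)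
      by (rewrite Nat2Z.inj_succ, succ_IZR; ring).
    rewrite e_add. revert IH.
    destruct (expi2pi th) as [x1 x2], (expi2pi (th * IZR (Z.of_nat m))) as [y1 y2],
      (csum (fun l => expi2pi (th * IZR l)) (rng m)) as [g1 g2].
    unfold Cmult, Cplus, RtoC; simpl. intro H; injection H; intros. apply Ceq; lra.
Qed.

Lemma geo (p k : Z) : (0 < p)%Z -> ~ (p | k)%Z ->
  csum (fun l => expi2pi (IZR k * IZR l / IZR p)) (rng (Z.to_nat p)) = RtoC 0.
Proof.
  intros Hp Hk. assert (Hp' : IZR p <> 0) by (apply not_0_IZR; lia).
  set (th := IZR k / IZR p).
  rewrite (csum_ext _ (fun l => expi2pi (th * IZR l))) by (intros; unfold th; f_equal; field; auto).
  pose proof (geo_step th (Z.to_nat p)) as G.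
  rewrite Z2Nat.id in G by lia.
  replace (th * IZR p) with (IZR k) in G by (unfold th; field; auto).
  rewrite e_int in G.
  assert (Hne : expi2pi th <> RtoC 1).
  { intro E. apply e_one in E. destruct E as [j Hj]. apply Hk. exists j.
    unfold th in Hj. apply eq_IZR. rewrite mult_IZR. rewrite <- Hj. field; auto. }
  revert G Hne. generalize (csum (fun l => expi2pi (th * IZR l)) (rng (Z.to_nat p))) as g.
  intros g G Hne. apply (Cmult_eq0 (Cplus (expi2pi th) (RtoC (-1)))).
  - revert G. destruct (expi2pi th) as [x1 x2], g as [g1 g2]. unfold Cmult, Cplus, RtoC; simpl.
    intro H; injection H; intros. apply Ceq; lra.
  - revert Hne. destruct (expi2pi th) as [x1 x2]. unfold Cplus, RtoC; simpl.
    intros H1 H2; apply H1; injection H2; intros; apply Ceq; lra.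
Qed.

Lemma hterm (s : R) (E : C) : (fst E)^2 + (snd E)^2 = 1 ->
  Cmult (Cconj (Cmult (RtoC s) E)) (Cmult (RtoC s) E) = RtoC (s * s).
Proof.
  destruct E as [a b]; intro H; cbn [fst snd] in H; unfold Cmult, Cconj, RtoC; cbn [fst snd]. apply Ceq.
  - transitivity (s*s*(a^2+b^2)); [ring | rewrite H; ring].
  - ring.
Qed.

Lemma e_norm a : (fst (expi2pi a))^2 + (snd (expi2pi a))^2 = 1.
Proof. unfold expi2pi; simpl. pose proof (sin2_cos2 (2*PI*a)). unfold Rsqr in H. lra. Qed.

Lemma s_sq (N : nat) : (0 < N)%nat -> / sqrt (INR N) * / sqrt (INR N) = / INR N.
Proof.
  intro H. assert (0 < INR N) by (apply lt_0_INR; auto).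
  rewrite <- Rinv_mult. rewrite sqrt_sqrt; lra.
Qed.

Lemma resid p D L d1 d2 : hadamard_triple p D L -> In d1 D -> In d2 D -> d1 <> d2 ->
  ~ (p | d1 - d2)%Z.
Proof.
  intros (Hp & HnD & HnL & Hlen & _ & Hcol) H1 H2 Hne [m Hm].
  specialize (Hcol d1 d2 H1 H2). unfold cdelta in Hcol.
  destruct (Z.eq_dec d1 d2); [contradiction|].
  assert (Hp' : IZR p <> 0) by (apply not_0_IZR; lia).
  assert (HN : (0 < length D)%nat) by (destruct D; simpl in *; [contradiction|lia]).
  rewrite (csum_ext _ (fun _ => RtoC (/ INR (length D)))) in Hcol.
  - rewrite csum_const, <- Hlen in Hcol. rewrite Rinv_r in Hcol.
    + unfold RtoC in Hcol. injection Hcol. lra.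
    + apply not_0_INR; lia.
  - intros l Hl. unfold hmat.
    replace (IZR d2 * IZR l / IZR p) with (IZR d1 * IZR l / IZR p + IZR (- (m * l))).
    + rewrite e_add, e_int.
      replace (Cmult (expi2pi (IZR d1 * IZR l / IZR p)) (RtoC 1)) with (expi2pi (IZR d1 * IZR l / IZR p))
        by (destruct (expi2pi (IZR d1 * IZR l / IZR p)); unfold Cmult, RtoC; simpl; apply Ceq; ring).
      rewrite hterm by apply e_norm. rewrite s_sq; auto.
    + assert (d2 = d1 - m * p)%Z by lia. subst d2.
      rewrite minus_IZR, opp_IZR, !mult_IZR. field; auto.
Qed.

Lemma len_le p D L : hadamard_triple p D L -> (forall l, In l L -> (0 <= l <= p - 1)%Z) ->
  (Z.of_nat (length D) <= p)%Z.
Proof.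
  intros (Hp & HnD & HnL & Hlen & _) HL.
  assert (incl L (rng (Z.to_nat p))) by (intros l Hl; rewrite In_rng; specialize (HL l Hl); lia).
  pose proof (NoDup_incl_length HnL H). rewrite length_rng in H0. lia.
Qed.

Lemma dir1 p D L : hadamard_triple p D L -> In 0%Z D -> In 0%Z L ->
  (forall l, In l L -> (0 <= l <= p - 1)%Z) ->
  Z.of_nat (length D) = p -> ~ DPC p D.
Proof.
  intros HT H0D H0L HL Heq HD.
  pose proof HT as (Hp & HnD & HnL & Hlen & Hrow & _).
  assert (Hp' : IZR p <> 0) by (apply not_0_IZR; lia).
  assert (HN : (0 < length D)%nat) by (destruct D; simpl in *; [contradiction|lia]).
  assert (Hfull : incl (rng (Z.to_nat p)) L).
  { apply NoDup_length_incl; auto. rewrite length_rng; lia.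
    intros l Hl; rewrite In_rng; specialize (HL l Hl); lia. }
  assert (Hz : forall l, In l L -> l <> 0%Z -> delta_hat (/ IZR p) D (0 + IZR l) = RtoC 0).
  { intros l Hl Hl0. specialize (Hrow l 0%Z Hl H0L). unfold cdelta in Hrow.
    destruct (Z.eq_dec l 0); [contradiction|]. rewrite <- Hrow.
    unfold delta_hat. rewrite csum_scal. apply csum_ext. intros d Hd. unfold hmat.
    replace (IZR d * IZR 0 / IZR p) with 0 by (simpl; field; auto). rewrite e0.
    replace (/ IZR p * IZR d * (0 + IZR l)) with (IZR d * IZR l / IZR p) by (field; auto).
    rewrite <- (s_sq _ HN).
    destruct (expi2pi (IZR d * IZR l / IZR p)). unfold Cmult, Cconj, RtoC; cbn [fst snd].
    apply Ceq; ring. }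
  destruct (HD 0) as [_ HT0]. destruct (HT0 ltac:(lra)) as (_ & l1 & l2 & H1 & H2 & H12 & N1 & N2).
  assert (In l1 L) by (apply Hfull; rewrite In_rng; lia).
  assert (In l2 L) by (apply Hfull; rewrite In_rng; lia).
  destruct (Z.eq_dec l1 0).
  - apply N2, Hz; auto. congruence.
  - apply N1, Hz; auto.
Qed.

Lemma dir2 p D L : hadamard_triple p D L -> In 0%Z D ->
  (Z.of_nat (length D) < p)%Z -> DPC p D.
Proof.
  intros HT H0D Hlt xi. split; [intros [H _]; exact H|]. intro Hxi. split; auto.
  pose proof HT as (Hp & HnD & HnL & Hlen & _).
  assert (Hp' : IZR p <> 0) by (apply not_0_IZR; lia).
  assert (HN : (0 < length D)%nat) by (destruct D; simpl in *; [contradiction|lia]).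
  set (n := Z.to_nat p).
  set (F := fun l : Z => csum (fun a => expi2pi (/ IZR p * IZR a * (xi + IZR l))) D).
  set (S := fun r : Z => csum (fun l => Cmult (F l) (expi2pi (- (IZR r * IZR l / IZR p)))) (rng n)).
  assert (Key : forall r, S r = csum (fun d => Cmult (expi2pi (IZR d * xi / IZR p))
       (csum (fun l => expi2pi (IZR (d - r) * IZR l / IZR p)) (rng n))) D).
  { intro r. unfold S, F.
    rewrite (csum_ext _ (fun l => csum (fun a => Cmult (expi2pi (/ IZR p * IZR a * (xi + IZR l)))
        (expi2pi (- (IZR r * IZR l / IZR p)))) D)) by (intros; apply csum_scal_r).
    rewrite csum_swap. apply csum_ext; intros d Hd. rewrite csum_scal. apply csum_ext; intros l Hl.
    rewrite <- !e_add. f_equal. rewrite minus_IZR. field; auto. }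
  assert (Hr : exists r, In r (rng n) /\ forall d, In d D -> ~ (p | d - r)%Z).
  { apply NNPP; intro Hne.
    assert (Hall : forall r, In r (rng n) -> exists d, In d D /\ (p | d - r)%Z).
    { intros r Hr. apply NNPP; intro Hn. apply Hne. exists r; split; auto.
      intros d Hd Hdv. apply Hn; eauto. }
    assert (incl (rng n) (map (fun d => Z.modulo d p) D)).
    { intros r Hr. destruct (Hall r Hr) as (d & Hd & [q Hq]). apply in_map_iff. exists d. split; auto.
      apply In_rng in Hr. unfold n in Hr. rewrite Z2Nat.id in Hr by lia.
      replace d with (r + q * p)%Z by lia. rewrite Z_mod_plus_full. apply Z.mod_small; lia. }
    pose proof (NoDup_incl_length (NoDup_rng n) H). rewrite length_rng, length_map in H0.
    unfold n in H0. lia. }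
  destruct Hr as (r & Hrn & Hrd).
  assert (Sr : S r = RtoC 0).
  { rewrite Key. apply csum_zero. intros d Hd. unfold n; rewrite geo; auto; [|lia].
    apply Cmult_0_r. }
  assert (S0 : S 0%Z <> RtoC 0).
  { rewrite Key. rewrite (csum_single _ _ 0%Z); auto.
    - rewrite (csum_ext _ (fun _ => RtoC 1)).
      + rewrite csum_const, length_rng. intro E. apply Cmult_eq0 in E; [|apply e_ne0].
        unfold RtoC in E. injection E. intros. unfold n in H. rewrite INR_IZR_INZ, Z2Nat.id in H by lia.
        apply (f_equal (fun x => x)) in H. assert (IZR p = 0) by lra. auto.
      + intros l _. replace (IZR (0 - 0) * IZR l / IZR p) with 0 by (simpl; field; auto). apply e0.
    - intros d Hd Hd0. unfold n; rewrite geo; [apply Cmult_0_r|lia|].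
      replace (d - 0)%Z with (d - 0)%Z by lia. apply (resid p D L); auto. }
  assert (Hdel : forall l, delta_hat (/ IZR p) D (xi + IZR l) <> RtoC 0 <-> F l <> RtoC 0).
  { intro l. split.
    - intros H E. apply H. unfold delta_hat. fold (F l). rewrite E. apply Cmult_0_r.
    - intros H E. apply H. apply Cmult_eq0 in E; auto. unfold RtoC; intro E'. injection E'.
      intro. apply Rinv_neq_0_compat in H0; auto. apply not_0_INR; lia. }
  assert (Hl1 : exists l1, In l1 (rng n) /\ F l1 <> RtoC 0).
  { apply NNPP; intro Hne. apply S0. apply csum_zero. intros l Hl.
    assert (F l = RtoC 0) by (apply NNPP; intro; apply Hne; eauto). rewrite H. apply Cmult_0_l. }
  destruct Hl1 as (l1 & Hl1 & F1).
  assert (Hl2 : exists l2, In l2 (rng n) /\ l2 <> l1 /\ F l2 <> RtoC 0).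
  { apply NNPP; intro Hne. apply (e_ne0 (- (IZR r * IZR l1 / IZR p))).
    apply (Cmult_eq0 (F l1)); auto. rewrite <- Sr. unfold S. symmetry. apply (csum_single (fun l => Cmult (F l) (expi2pi (- (IZR r * IZR l / IZR p))))); auto.
    apply NoDup_rng. intros l Hl Hll.
    assert (F l = RtoC 0) by (apply NNPP; intro; apply Hne; eauto). rewrite H. apply Cmult_0_l. }
  destruct Hl2 as (l2 & Hl2 & H12 & F2).
  apply In_rng in Hl1, Hl2. unfold n in Hl1, Hl2. rewrite Z2Nat.id in Hl1, Hl2 by lia.
  exists l1, l2. repeat split; try lia; auto; apply Hdel; auto.
Qed.

Theorem lemma3p2 (p : Z) (D L : list Z) :
  hadamard_triple p D L ->
  In 0%Z D -> (forall d, In d D -> (0 <= d)%Z) ->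
  In 0%Z L -> (forall l, In l L -> (0 <= l <= p - 1)%Z) ->
  (DPC p D <-> (Z.of_nat (length D) < p)%Z).
Proof.
  intros HT H0D _ H0L HL. split.
  - intro HD. pose proof (len_le p D L HT HL).
    destruct (Z.eq_dec (Z.of_nat (length D)) p) as [E|E]; [|lia].
    exfalso; exact (dir1 p D L HT H0D H0L HL E HD).
  - apply (dir2 p D L HT H0D).
Qed.
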